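(* Let $n\ge 4$ and consider the 2NC-TAP instance in which $T=K_{1,n-1}$ is a star with center $r$ and leaves $w_1,\dots,w_{n-1}$ (tree edges of cost $0$), and the links are the $n-1$ unit-cost edges $w_1w_2,w_2w_3,\dots,w_{n-2}w_{n-1},w_{n-1}w_1$ forming a cycle on the leaves. Then every 2-node connected spanning subgraph of this graph has cost at least $n-2$, while the vector $\hat x$ with $\hat x_e=1$ on tree edges and $\hat x_\ell=\frac12$ on each link is a feasible solution of the set-pairs LP of cost $\frac{n-1}{2}$. Hence the integrality ratio of the set-pairs LP for the min-cost 2NCSS problem is at least $\frac{2(n-2)}{n-1}=2-\frac{2}{n-1}$.
   Context: For a graph $G=(V,E)$ with nonnegative edge costs $c$, the set-pairs LP for the min-cost 2-node connected spanning subgraph (2NCSS) problem is: minimize $\sum_{e\in E}c_ex_e$ subject to $x(\delta(S))\ge 2$ for all $\emptyset\ne S\subsetneq V$; for every node $w\in V$ and every $\emptyset\ne S\subsetneq V\setminus\{w\}$, $\sum\{x_e: e=uv\in E,\ u\in S,\ v\in (V\setminus\{w\})\setminus S\}\ge 1$; and $0\le x\le 1$. Here $\delta(S)$ is the set of edges with exactly one end node in $S$ and $x(F)=\sum_{e\in F}x_e$. The integrality ratio is the ratio of the minimum cost of a 2-node connected spanning subgraph to the LP optimum. *)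

(* Defs.v *)
From HB Require Import structures.
From mathcomp Require Import all_boot all_order all_algebra.
Set Implicit Arguments. Unset Strict Implicit. Unset Printing Implicit Defensive.
Import Order.TTheory GRing.Theory Num.Theory.
Local Open Scope ring_scope.

(* Graphs on a finite node type V; an edge is a 2-element subset of V. *)
Section Generic.
Variable V : finType.

Definition adjF (F : {set {set V}}) (U : {set V}) : rel V :=
  fun x y => [&& x != y, x \in U, y \in U & [set x; y] \in F].

Definition connected_on (F : {set {set V}}) (U : {set V}) : Prop :=
  forall x y, x \in U -> y \in U -> connect (adjF F U) x y.

Definition two_node_connected (F : {set {set V}}) : Prop :=
  (2 < #|V|)%N /\ connected_on F setT /\ forall w, connected_on F (~: [set w]).

Variable R : realFieldType.

Definition cost (c : {set V} -> R) (F : {set {set V}}) : R := \sum_(e in F) c e.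

Definition lp_cost (E : {set {set V}}) (c x : {set V} -> R) : R :=
  \sum_(e in E) c e * x e.

Definition setpairs_feasible (E : {set {set V}}) (x : {set V} -> R) : Prop :=
  [/\ (forall e, e \in E -> 0 <= x e <= 1),
      (forall S : {set V}, S != set0 -> S != setT ->
          2 <= \sum_(e in E | #|e :&: S| == 1%N) x e) &
      (forall (w : V) (S : {set V}), S != set0 -> S \subset ~: [set w] ->
          S != ~: [set w] ->
          1 <= \sum_(e in E | (w \notin e) && (#|e :&: S| == 1%N)) x e)].
End Generic.

(* The instance: nodes 'I_n, node 0 is the center r, nodes 1..n-1 are the
   leaves w_1..w_{n-1}. Edges: spokes r w_i, and the cycle links
   w_i w_{i+1} (1 <= i <= n-2) and w_{n-1} w_1. *)
Definition wheel_adj (n : nat) (u v : 'I_n) : bool :=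
  ((val u == 0%N) && (val v != 0%N)) ||
  [&& (0 < val u)%N, (0 < val v)%N &
      (val v == (val u).+1) || ((val u == n.-1) && (val v == 1%N))].

Definition wheelE (n : nat) : {set {set 'I_n}} :=
  [set e : {set 'I_n} | [exists u : 'I_n, exists v : 'I_n,
                          (e == [set u; v]) && wheel_adj u v]].

Definition wheel_cost (R : realFieldType) (n : nat) (e : {set 'I_n}) : R :=
  if [exists u in e, val u == 0%N] then 0 else 1.

Definition xhat (R : realFieldType) (n : nat) (e : {set 'I_n}) : R :=
  if [exists u in e, val u == 0%N] then 1 else 2^-1.

(* Main.v *)
Require Import Defs.
From HB Require Import structures.
From mathcomp Require Import all_boot all_order all_algebra.
From mathcomp Require Import zify ring lra.
Import Order.TTheory GRing.Theory Num.Theory.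
Set Implicit Arguments. Unset Strict Implicit. Unset Printing Implicit Defensive.
Local Open Scope ring_scope.

Definition nx (m k : nat) : nat := if k == m then 1%N else k.+1.
Definition nxt m (i : 'I_m.+1) : 'I_m.+1 := inord (nx m i).
Definition prv m (i : 'I_m.+1) : 'I_m.+1 :=
  inord (if nat_of_ord i == 1%N then m else (nat_of_ord i).-1).
Definition lnk m (i : 'I_m.+1) : {set 'I_m.+1} := [set i; nxt i].
Definition spk m (i : 'I_m.+1) : {set 'I_m.+1} := [set ord0; i].

Lemma pos_m m (i : 'I_m.+1) : (0 < i)%N -> (0 < m)%N.
Proof. have := ltn_ord i; lia. Qed.

Lemma val_nxt m (hm : (0 < m)%N) (i : 'I_m.+1) : nat_of_ord (nxt i) = nx m i.
Proof. rewrite /nxt inordK // /nx; have := ltn_ord i; case: ifP => /eqP; lia. Qed.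

Lemma val_prv m (i : 'I_m.+1) : (0 < i)%N ->
  nat_of_ord (prv i) = if nat_of_ord i == 1%N then m else (nat_of_ord i).-1.
Proof. move=> h; rewrite /prv inordK //; have := ltn_ord i; case: ifP; lia. Qed.

Lemma nxt_prv m (i : 'I_m.+1) : (0 < i)%N -> nxt (prv i) = i.
Proof.
move=> h; have hm0 := pos_m h; apply/val_inj => /=; rewrite (val_nxt hm0) val_prv // /nx.
have := ltn_ord i; case E: (nat_of_ord i == 1%N); case: ifP; lia.
Qed.

Lemma lnkE m (i : 'I_m.+1) : (0 < i)%N -> lnk i \in wheelE m.+1.
Proof.
move=> hi; rewrite inE; apply/existsP; exists i; apply/existsP; exists (nxt i).
rewrite eqxx /= /wheel_adj /= (val_nxt (pos_m hi)) /nx; have := ltn_ord i; case: ifP; lia.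
Qed.

Lemma spkE m (i : 'I_m.+1) : (0 < i)%N -> spk i \in wheelE m.+1.
Proof.
move=> hi; rewrite inE; apply/existsP; exists ord0; apply/existsP; exists i.
rewrite eqxx /= /wheel_adj /=; lia.
Qed.

Lemma E_cases m (e : {set 'I_m.+1}) : e \in wheelE m.+1 ->
  (exists2 i : 'I_m.+1, (0 < i)%N & e = spk i) \/
  (exists2 i : 'I_m.+1, (0 < i)%N & e = lnk i).
Proof.
rewrite inE => /existsP [u /existsP [v /andP [/eqP -> h]]].
move: h; rewrite /wheel_adj /= => /orP [/andP [h0 h1] | /and3P [h0 h1 h2]].
- left; exists v; first lia.
  have -> : u = ord0 by apply/val_inj; apply/eqP.
  by [].
- right; exists u => //.
  have -> : v = nxt u; last by [].
  apply/val_inj => /=; rewrite (val_nxt (pos_m h0)) /nx; have := ltn_ord v; case: ifP; lia.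
Qed.

Lemma has0_spk m (i : 'I_m.+1) : [exists u in spk i, val u == 0%N].
Proof. by apply/existsP; exists ord0; rewrite !inE eqxx. Qed.

Lemma has0_lnk m (i : 'I_m.+1) : (0 < i)%N -> [exists u in lnk i, val u == 0%N] = false.
Proof.
move=> hi; apply/negbTE/existsP => [[u]]; rewrite !inE.
case/andP => /orP [/eqP->|/eqP->] /=; rewrite ?(val_nxt (pos_m hi)) /nx; try case: ifP; lia.
Qed.

Lemma lnk_inj m (hm : (3 <= m)%N) (i j : 'I_m.+1) : (0 < i)%N -> (0 < j)%N ->
  lnk i = lnk j -> i = j.
Proof.
move=> hi hj e.
have hx : i \in lnk j by rewrite -e !inE eqxx.
have hy : nxt i \in lnk j by rewrite -e !inE eqxx orbT.
move: hx hy; rewrite !inE => /orP [/eqP//|/eqP hij] /orP [/eqP h|/eqP h].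
- move: (congr1 (@nat_of_ord _) h) (congr1 (@nat_of_ord _) hij); rewrite !(val_nxt (pos_m hi)) /nx.
  have := ltn_ord i; have := ltn_ord j; do 2 case: ifP; lia.
- move: (congr1 (@nat_of_ord _) h) (congr1 (@nat_of_ord _) hij); rewrite !(val_nxt (pos_m hi)) /nx.
  have := ltn_ord i; have := ltn_ord j; do 2 case: ifP; lia.
Qed.

Lemma sum_ge1 (R : realFieldType) (T : finType) (P : pred T) (f : T -> R) e1 :
  (forall e, P e -> 0 <= f e) -> P e1 -> f e1 <= \sum_(e | P e) f e.
Proof.
move=> h p1; rewrite (bigD1 e1) //= lerDl sumr_ge0 // => e /andP [? _]; exact: h.
Qed.

Lemma sum_ge2 (R : realFieldType) (T : finType) (P : pred T) (f : T -> R) e1 e2 :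
  (forall e, P e -> 0 <= f e) -> P e1 -> P e2 -> e1 != e2 ->
  f e1 + f e2 <= \sum_(e | P e) f e.
Proof.
move=> h p1 p2 n12; rewrite (bigD1 e1) //= (bigD1 e2) /=; last by rewrite p2 eq_sym.
rewrite addrA lerDl sumr_ge0 // => e /andP [/andP [? _] _]; exact: h.
Qed.

Lemma sum_ge3 (R : realFieldType) (T : finType) (P : pred T) (f : T -> R) e1 e2 e3 :
  (forall e, P e -> 0 <= f e) -> P e1 -> P e2 -> P e3 -> e1 != e2 -> e1 != e3 -> e2 != e3 ->
  f e1 + f e2 + f e3 <= \sum_(e | P e) f e.
Proof.
move=> h p1 p2 p3 n12 n13 n23; rewrite (bigD1 e1) //= (bigD1 e2) /=; last by rewrite p2 eq_sym.
rewrite (bigD1 e3) /=; last by rewrite p3 eq_sym n13 eq_sym n23.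
rewrite !addrA lerDl sumr_ge0 // => e /andP [/andP [/andP [? _] _] _]; exact: h.
Qed.

Lemma cross1 (T : finType) (S : {set T}) a b :
  (a \in S) != (b \in S) -> #|[set a; b] :&: S| == 1%N.
Proof.
case: (boolP (a \in S)) => ha; case: (boolP (b \in S)) => hb //= _.
- have -> : [set a; b] :&: S = [set a]; last by rewrite cards1.
  apply/setP => z; rewrite !inE; case: (z =P a) => [->|_]; rewrite ?ha //=.
  by case: (z =P b) => [->|]; rewrite ?(negbTE hb).
- have -> : [set a; b] :&: S = [set b]; last by rewrite cards1.
  apply/setP => z; rewrite !inE; case: (z =P b) => [->|_]; rewrite ?hb ?orbT //=.
  by case: (z =P a) => [->|]; rewrite ?(negbTE ha).
Qed.

Lemma ivt (P : nat -> bool) a b : (a <= b)%N -> P a != P b ->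
  exists u, [/\ (a <= u)%N, (u < b)%N & P u != P u.+1].
Proof.
elim: b => [|b IH] hab hP; first by move: hab hP; rewrite leqn0 => /eqP ->; rewrite eqxx.
case: (boolP (P a != P b)) => h.
- have hab' : (a <= b)%N by case: (a =P b.+1) hab => [e|]; [by move: hP; rewrite e eqxx | lia].
  by case: (IH hab' h) => u [h1 h2 h3]; exists u; split => //; lia.
- exists b; split => //.
  + by case: (a =P b.+1) hab => [e|]; [by move: hP; rewrite e eqxx | lia].
  + by move: h hP; case: (P a); case: (P b); case: (P b.+1).
Qed.

Lemma two_cross m (P : nat -> bool) i j : (3 <= m)%N ->
  (1 <= i <= m)%N -> (1 <= j <= m)%N -> P i != P j ->
  exists u1 u2, [/\ (1 <= u1 <= m)%N, (1 <= u2 <= m)%N, u1 != u2,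
     P u1 != P (nx m u1) & P u2 != P (nx m u2)].
Proof.
wlog : i j / (i < j)%N.
  move=> W hm hi hj hP; case: (ltngtP i j) => h.
  - exact: (W i j).
  - by apply: (W j i) => //; rewrite eq_sym.
  - by move: hP; rewrite h eqxx.
move=> hij hm hi hj hP.
have hnx : forall u, (u < m)%N -> nx m u = u.+1.
  by move=> u hu; rewrite /nx; case: ifP => //; lia.
have [u1 [h1 h2 h3]] := ivt (ltnW hij) hP.
have hjm' : (j <= m)%N by lia.
have e1 : nx m u1 = u1.+1 by apply: hnx; lia.
case: (boolP (P j != P m)) => hjm.
  have [u2 [h4 h5 h6]] := ivt hjm' hjm.
  exists u1, u2; split => //; try lia.
  - by rewrite e1.
  - by rewrite hnx.
move/negPn/eqP: hjm => hjm.
case: (boolP (P m != P 1%N)) => hm1.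
  exists u1, m; split => //; try lia.
  - by rewrite e1.
  - by rewrite /nx eqxx.
move/negPn/eqP: hm1 => hm1.
have hi1 : P 1%N != P i by rewrite -hm1 -hjm eq_sym.
have [u2 [h4 h5 h6]] := ivt (proj1 (andP hi)) hi1.
exists u1, u2; split => //; try lia.
- by rewrite e1.
- by rewrite hnx //; lia.
Qed.

Lemma in_lnk m (u x : 'I_m.+1) : x \in lnk u -> x = u \/ x = nxt u.
Proof. by rewrite !inE => /orP [/eqP|/eqP]; [left|right]. Qed.

Lemma arc m (hm : (3 <= m)%N) (F : {set {set 'I_m.+1}}) (a b : 'I_m.+1) :
  F \subset wheelE m.+1 -> connected_on F (~: [set ord0]) ->
  (0 < a)%N -> (0 < b)%N -> lnk a \notin F -> lnk b \notin F -> a = b.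
Proof.
move=> sF hc.
wlog : a b / (a <= b)%N.
  move=> W ha hb hfa hfb; case: (leqP a b) => h; first exact: W.
  by symmetry; apply: W => //; apply: ltnW.
move=> hab ha hb hfa hfb.
case: (a =P b) => // nab; exfalso.
have hlt : (a < b)%N by case: ltngtP hab nab => // e _ []; apply/val_inj.
pose C := [set x : 'I_m.+1 | (a < x <= b)%N].
have cl : closed (adjF F (~: [set ord0])) C.
  move=> x y /and4P [hxy hx hy hF].
  move: hx hy; rewrite !inE => hx hy.
  case: (E_cases (subsetP sF _ hF)) => [[i hi ei]|[u hu eu]].
  - have : x \in spk i by rewrite -ei !inE eqxx.
    have : y \in spk i by rewrite -ei !inE eqxx orbT.
    rewrite !inE (negbTE hx) (negbTE hy) /= => /eqP ey /eqP ex.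
    by move: hxy; rewrite ex ey eqxx.
  - have ua : u != a by apply: contraNneq hfa => <-; rewrite -eu.
    have ub : u != b by apply: contraNneq hfb => <-; rewrite -eu.
    have : x \in lnk u by rewrite -eu !inE eqxx.
    have : y \in lnk u by rewrite -eu !inE eqxx orbT.
    have hm0 := pos_m hu.
    have ua' : nat_of_ord u <> nat_of_ord a by move/val_inj => e; rewrite e eqxx in ua.
    have ub' : nat_of_ord u <> nat_of_ord b by move/val_inj => e; rewrite e eqxx in ub.
    have := ltn_ord u; have := ltn_ord b.
    move=> o1 o2 /in_lnk [] -> /in_lnk [] ->; rewrite ?eqxx in hxy; try done;
      rewrite ?inE (val_nxt hm0) /nx; case: ifP => /eqP ?;
      apply/idP/idP; lia.
have hb0 : b \in [set~ ord0] by rewrite !inE; apply/eqP => e; rewrite e in hb.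
have ha0 : a \in [set~ ord0] by rewrite !inE; apply/eqP => e; rewrite e in ha.
have := closed_connect cl (hc b a hb0 ha0).
by rewrite !inE hlt leqnn ltnn.
Qed.

Lemma part1 (R : realFieldType) m (hm : (3 <= m)%N) (F : {set {set 'I_m.+1}}) :
  F \subset wheelE m.+1 -> two_node_connected F ->
  ((m.+1)%:R - 2 : R) <= cost (@wheel_cost R m.+1) F.
Proof.
move=> sF [_ [_ hc]]; have hc0 := hc ord0.
pose K := [set i : 'I_m.+1 | (0 < i)%N].
pose J := [set i in K | lnk i \in F].
have cK : #|K| = m.
  have -> : K = [set~ ord0] by apply/setP => i; rewrite !inE lt0n.
  by rewrite cardsC1 card_ord.
have cD : (#|K :\: J| <= 1)%N.
  apply/card_le1_eqP => x y; rewrite !inE => /andP [hxJ hx] /andP [hyJ hy].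
  rewrite hx /= in hxJ; rewrite hy /= in hyJ.
  exact: (arc hm sF hc0).
have cJ : (m - 1 <= #|J|)%N.
  have := cardsID J K.
  have -> : K :&: J = J.
    by apply/setIidPr/subsetP => i; rewrite !inE => /andP [].
  lia.
have inj : {in J &, injective (@lnk m)}.
  by move=> x y; rewrite !inE => /andP [hx _] /andP [hy _]; exact: lnk_inj.
pose L := (@lnk m) @: J.
have cL : #|L| = #|J| by apply: card_in_imset.
have sL : L \subset F.
  by apply/subsetP => e /imsetP [i]; rewrite inE => /andP [_ h] ->.
have hL : \sum_(e in L) (@wheel_cost R m.+1) e = #|L|%:R.
  rewrite -sumr_const; apply: eq_bigr => e /imsetP [i].
  by rewrite !inE => /andP [hi _] ->; rewrite /wheel_cost has0_lnk.
have hge : #|L|%:R <= cost (@wheel_cost R m.+1) F.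
  rewrite /cost (big_setID L) /= (setIidPr sL) -hL lerDl.
  apply: sumr_ge0 => e _; rewrite /wheel_cost; case: ifP => _ //.
apply: le_trans hge.
have -> : ((m.+1)%:R - 2 : R) = (m - 1)%N%:R.
  rewrite natrB; last lia.
  by rewrite -addn1 natrD; lra.
by rewrite ler_nat cL.
Qed.

Lemma part3 (R : realFieldType) m (hm : (3 <= m)%N) :
  lp_cost (wheelE m.+1) (@wheel_cost R m.+1) (@xhat R m.+1) = ((m.+1)%:R - 1) / 2.
Proof.
rewrite /lp_cost (eq_bigr (fun e : {set 'I_m.+1} => if ~~ [exists u in e, val u == 0%N] then 2^-1 else (0 : R))); last first.
  by move=> e _; rewrite /wheel_cost /xhat; case: ifP => /= _; rewrite ?mul0r ?mul1r.
rewrite -big_mkcondr /=.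
pose Ls := [set e in wheelE m.+1 | ~~ [exists u in e, val u == 0%N]].
rewrite (eq_bigl (fun e => e \in Ls)); last by move=> e; rewrite !inE.
rewrite sumr_const.
pose K := [set i : 'I_m.+1 | (0 < i)%N].
have cK : #|K| = m.
  have -> : K = [set~ ord0] by apply/setP => i; rewrite !inE lt0n.
  by rewrite cardsC1 card_ord.
have -> : Ls = (@lnk m) @: K.
  apply/setP => e; rewrite inE; apply/andP/imsetP.
  - case=> he hn; case: (E_cases he) => [[i hi ei]|[i hi ei]].
      by rewrite ei has0_spk in hn.
    by exists i; rewrite ?inE.
  - by case=> i; rewrite inE => hi ->; rewrite lnkE // has0_lnk.
rewrite card_in_imset; last first.
  by move=> x y; rewrite !inE => hx hy; exact: lnk_inj.
rewrite cK -mulr_natr -natr1; by field.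
Qed.

Lemma lnk_notin0 m (i : 'I_m.+1) : (0 < i)%N -> ord0 \notin lnk i.
Proof.
move=> hi; apply/negP => h; have := has0_lnk hi.
by have -> : [exists u in lnk i, val u == 0%N]; [apply/existsP; exists ord0; rewrite h|].
Qed.

Lemma spk_neq_lnk m (i j : 'I_m.+1) : (0 < i)%N -> spk j != lnk i.
Proof.
move=> hi; apply/eqP => e; have := lnk_notin0 hi; by rewrite -e !inE eqxx.
Qed.

Lemma spk_neq m (y z : 'I_m.+1) : (0 < y)%N -> y != z -> spk y != spk z.
Proof.
move=> hy hyz; apply/eqP => e.
have : y \in spk z by rewrite -e !inE eqxx orbT.
rewrite !inE (negbTE hyz) orbF => /eqP ey; by rewrite ey in hy.
Qed.

Lemma xhat_spk (R : realFieldType) m (i : 'I_m.+1) : @xhat R m.+1 (spk i) = 1.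
Proof. by rewrite /xhat has0_spk. Qed.

Lemma xhat_lnk (R : realFieldType) m (i : 'I_m.+1) : (0 < i)%N -> @xhat R m.+1 (lnk i) = 2^-1.
Proof. by move=> hi; rewrite /xhat has0_lnk. Qed.

Lemma prv_pos m (y : 'I_m.+1) : (0 < y)%N -> (0 < prv y)%N.
Proof. move=> hy; rewrite val_prv //; have := ltn_ord y; case: ifP; lia. Qed.

Lemma prv_neq m (y : 'I_m.+1) : (2 <= m)%N -> (0 < y)%N -> prv y != y.
Proof.
move=> hm hy; apply/eqP => /(congr1 (@nat_of_ord _)); rewrite val_prv //.
have := ltn_ord y; case: ifP; lia.
Qed.

Lemma nxt_neq m (y : 'I_m.+1) : (2 <= m)%N -> (0 < y)%N -> nxt y != y.
Proof.
move=> hm hy; apply/eqP => /(congr1 (@nat_of_ord _)); rewrite (val_nxt (pos_m hy)) /nx.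
have := ltn_ord y; case: ifP; lia.
Qed.

Lemma nxt_inord m (u : nat) : (u <= m)%N -> (0 < m)%N ->
  nxt (inord u : 'I_m.+1) = inord (nx m u).
Proof. by move=> hu hm; rewrite /nxt inordK. Qed.

Lemma xhat_ge0 (R : realFieldType) m e : 0 <= @xhat R m e.
Proof. rewrite /xhat; case: ifP => _ //; rewrite invr_ge0; lra. Qed.

Lemma exists_out (T : finType) (A S : {set T}) :
  S \subset A -> S != A -> exists2 s, s \in A & s \notin S.
Proof.
move=> sSA nSA; case: (pickP (fun s => (s \in A) && (s \notin S))) => [s /andP [h1 h2]|hn].
  by exists s.
exfalso; move/negP: nSA; apply; rewrite eqEsubset sSA /=.
apply/subsetP => s hs; have := hn s; rewrite hs /=; by move/negbFE.
Qed.

Lemma pos_of m (y : 'I_m.+1) : y != ord0 -> (0 < y)%N.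
Proof. move=> h; rewrite lt0n; apply/eqP => e; move/eqP: h; apply; exact: val_inj. Qed.

Lemma part2 (R : realFieldType) m (hm : (3 <= m)%N) :
  setpairs_feasible (wheelE m.+1) (@xhat R m.+1).
Proof.
have hm2 : (2 <= m)%N by lia.
split.
- move=> e _; rewrite xhat_ge0 /= /xhat; case: ifP => _ //.
  rewrite invf_le1; lra.
- move=> S hS0 hST.
  have [y hy] : exists y, (y \in S) != (ord0 \in S).
    case: (boolP (ord0 \in S)) => h0.
      have [s _ hs] := exists_out (subsetT S) hST.
      by exists s; rewrite (negbTE hs).
    by have [s hs] := set0Pn _ hS0; exists s; rewrite hs.
  have hy0 : (0 < y)%N.
    by apply: pos_of; apply: contraNneq hy => ->; rewrite eqxx.
  case: (pickP (fun z => (z != y) && ((z \in S) != (ord0 \in S)))) => [z /andP [hzy hz]|hn].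
  + have hz0 : (0 < z)%N.
      by apply: pos_of; apply: contraNneq hz => ->; rewrite eqxx.
    apply: le_trans (sum_ge2 (P := fun e => (e \in wheelE m.+1) && (#|e :&: S| == 1%N))
       (f := @xhat R m.+1) (e1 := spk y) (e2 := spk z) _ _ _ _).
    * by rewrite !xhat_spk.
    * by move=> e _; exact: xhat_ge0.
    * by rewrite /= spkE // cross1 // eq_sym.
    * by rewrite /= spkE // cross1 // eq_sym.
    * by apply: spk_neq => //; rewrite eq_sym.
  + have hall : forall z, z != y -> (z \in S) = (ord0 \in S).
      by move=> z hz; have := hn z; rewrite hz /= => /negbT/negPn/eqP.
    have hp0 := prv_pos hy0.
    have hpn := prv_neq hm2 hy0.
    apply: le_trans (sum_ge3 (P := fun e => (e \in wheelE m.+1) && (#|e :&: S| == 1%N))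
       (f := @xhat R m.+1) (e1 := spk y) (e2 := lnk y) (e3 := lnk (prv y)) _ _ _ _ _ _ _).
    * rewrite xhat_spk !xhat_lnk //; lra.
    * by move=> e _; exact: xhat_ge0.
    * by rewrite /= spkE // cross1 // eq_sym.
    * by rewrite /= lnkE // /lnk cross1 // (hall _ (nxt_neq hm2 hy0)).
    * rewrite /= lnkE // /lnk nxt_prv //; apply: cross1; by rewrite hall // eq_sym.
    * exact: spk_neq_lnk.
    * exact: spk_neq_lnk.
    * by apply/eqP => /(lnk_inj hm hy0 hp0) e; move: hpn; rewrite -e eqxx.
- move=> w S hS0 hSw hne.
  have [s hsw hs] := exists_out hSw hne.
  have [t ht] := set0Pn _ hS0.
  have htw : t \in [set~ w] by apply: (subsetP hSw).
  case: (w =P ord0) => [ew|nw].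
  + subst w.
    have hs0 : (0 < s)%N by apply: pos_of; move: hsw; rewrite !inE; apply.
    have ht0 : (0 < t)%N by apply: pos_of; move: htw; rewrite !inE; apply.
    have [u1 [u2 [hu1 hu2 hu12 c1 c2]]] :=
      @two_cross m (fun k => (inord k : 'I_m.+1) \in S) t s hm
        (ltac:(have := ltn_ord t; lia)) (ltac:(have := ltn_ord s; lia))
        (ltac:(by rewrite /= !inord_val ht (negbTE hs))).
    have hm0 : (0 < m)%N by lia.
    have v1 : nat_of_ord (inord u1 : 'I_m.+1) = u1 by rewrite inordK //; lia.
    have v2 : nat_of_ord (inord u2 : 'I_m.+1) = u2 by rewrite inordK //; lia.
    have p1 : (0 < (inord u1 : 'I_m.+1))%N by rewrite v1; lia.
    have p2 : (0 < (inord u2 : 'I_m.+1))%N by rewrite v2; lia.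
    apply: le_trans (sum_ge2
       (P := fun e => (e \in wheelE m.+1) && ((ord0 \notin e) && (#|e :&: S| == 1%N)))
       (f := @xhat R m.+1) (e1 := lnk (inord u1)) (e2 := lnk (inord u2)) _ _ _ _).
    * rewrite !xhat_lnk //; lra.
    * by move=> e _; exact: xhat_ge0.
    * rewrite /= lnkE // lnk_notin0 // /lnk cross1 // nxt_inord //; lia.
    * rewrite /= lnkE // lnk_notin0 // /lnk cross1 // nxt_inord //; lia.
    * apply/eqP => /(lnk_inj hm p1 p2) /(congr1 (@nat_of_ord _)).
      by rewrite v1 v2 => e; rewrite e eqxx in hu12.
  + case: (boolP (ord0 \in S)) => h0.
    * have hs0 : (0 < s)%N by apply: pos_of; apply: contraNneq hs => ->.
      apply: le_trans (sum_ge1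
       (P := fun e => (e \in wheelE m.+1) && ((w \notin e) && (#|e :&: S| == 1%N)))
       (f := @xhat R m.+1) (e1 := spk s) _ _).
      - by rewrite xhat_spk.
      - by move=> e _; exact: xhat_ge0.
      - rewrite /= spkE // cross1 ?h0 ?(negbTE hs) // andbT !inE.
        move: hsw; rewrite !inE => hsw.
        apply/negP => /orP [/eqP e|/eqP e]; first exact: nw.
        by rewrite e eqxx in hsw.
    * have ht0 : (0 < t)%N by apply: pos_of; apply: contraNneq h0 => <-.
      apply: le_trans (sum_ge1
       (P := fun e => (e \in wheelE m.+1) && ((w \notin e) && (#|e :&: S| == 1%N)))
       (f := @xhat R m.+1) (e1 := spk t) _ _).
      - by rewrite xhat_spk.
      - by move=> e _; exact: xhat_ge0.
      - rewrite /= spkE // cross1 ?ht ?(negbTE h0) // andbT !inE.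
        move: htw; rewrite !inE => htw.
        apply/negP => /orP [/eqP e|/eqP e]; first exact: nw.
        by rewrite e eqxx in htw.
Qed.

Theorem mainTheorem8 (R : realFieldType) (n : nat) (hn : (4 <= n)%N) :
  [/\ (forall F : {set {set 'I_n}}, F \subset wheelE n -> two_node_connected F ->
         (n%:R - 2 : R) <= cost (@wheel_cost R n) F),
      setpairs_feasible (wheelE n) (@xhat R n),
      lp_cost (wheelE n) (@wheel_cost R n) (@xhat R n) = (n%:R - 1) / 2 &
      (exists x : {set 'I_n} -> R, setpairs_feasible (wheelE n) x /\
         forall F : {set {set 'I_n}}, F \subset wheelE n -> two_node_connected F ->
           (2 - 2 / (n%:R - 1)) * lp_cost (wheelE n) (@wheel_cost R n) x
             <= cost (@wheel_cost R n) F)].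
Proof.
case: n hn => [//|m] hn.
have hm : (3 <= m)%N by lia.
have p1 := part1 R hm.
have p3 := part3 R hm.
split.
- exact: p1.
- exact: part2.
- exact: p3.
- exists (@xhat R m.+1); split; first exact: part2.
  move=> F sF hF; rewrite p3; apply: le_trans (p1 F sF hF).
  have hm0 : (m%:R : R) != 0 by rewrite pnatr_eq0; lia.
  have -> : (m.+1%:R - 1 : R) = m%:R by rewrite -natr1 addrK.
  have -> : (2 - 2 / m%:R) * (m%:R / 2) = (m.+1%:R - 2 : R).
    by rewrite -natr1; field.
  by [].
Qed.
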